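(* Let $\mathfrak{S}=(\mathcal{X},\mathsf{S},\gamma,(\Lambda_{a})_{a\in\mathcal{A}})$ be a spectral decomposition system for the Euclidean space $\mathfrak{H}$, let $\mathcal{D}$ be a nonempty subset of $\mathfrak{H}$, and set \[\mathcal{K}=\Big\{\sum_{i=1}^m\alpha_iX_i : m\geq 1,\ (X_i)_{1\leq i\leq m}\in\mathcal{D}^m,\ (\alpha_i)_{1\leq i\leq m}\in[0,+\infty)^m\Big\}.\] Then the following are equivalent: (i) $\langle X,Y\rangle=\langle\gamma(X),\gamma(Y)\rangle$ for all $X,Y\in\mathcal{D}$; (ii) $\|X-Y\|=\|\gamma(X)-\gamma(Y)\|$ for all $X,Y\in\mathcal{D}$; (iii) there exists $a\in\mathcal{A}$ such that $X=\Lambda_a\gamma(X)$ for all $X\in\mathcal{D}$; (iv) there exists $a\in\mathcal{A}$ such that $X=\Lambda_a\gamma(X)$ for all $X\in\mathcal{K}$. Moreover, if one of (i)–(iv) holds, then for every $m\geq 1$, every $(X_i)_{1\leq i\leq m}\in\mathcal{D}^m$ and every $(\alpha_i)_{1\leq i\leq m}\in[0,+\infty)^m$, $\gamma\big(\sum_{i=1}^m\alpha_iX_i\big)=\sum_{i=1}^m\alpha_i\gamma(X_i)$.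
   Context: A Euclidean space is a finite-dimensional real inner product space; inner products are written $\langle\cdot,\cdot\rangle$ and norms $\|\cdot\|$. Let $\mathfrak{H}$ and $\mathcal{X}$ be Euclidean spaces, let $\mathsf{S}$ be a group acting on $\mathcal{X}$ by linear isometries, let $\gamma\colon\mathfrak{H}\to\mathcal{X}$, and let $(\Lambda_a)_{a\in\mathcal{A}}$ be a family of linear operators from $\mathcal{X}$ to $\mathfrak{H}$. The orbit of $x$ is $\mathsf{S}\cdot x=\{s\cdot x: s\in\mathsf{S}\}$; a map $f$ on $\mathcal{X}$ is $\mathsf{S}$-invariant if $f(s\cdot x)=f(x)$ for all $s,x$. The tuple is a spectral decomposition system for $\mathfrak{H}$ if: [A] every $\Lambda_a$ is an isometry; [B] there exists an $\mathsf{S}$-invariant $\tau\colon\mathcal{X}\to\mathcal{X}$ with $\tau(x)\in\mathsf{S}\cdot x$ for all $x$ and $\gamma\circ\Lambda_a=\tau$ for all $a$; [C] for every $X\in\mathfrak{H}$ there is $a$ with $X=\Lambda_a\gamma(X)$; [D] $\langle X,Y\rangle\leq\langle\gamma(X),\gamma(Y)\rangle$ for all $X,Y\in\mathfrak{H}$. *)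

(* Defs.v *)
From HB Require Import structures.
From mathcomp Require Import all_boot all_order all_algebra.
From mathcomp Require Import reals.
Set Implicit Arguments. Unset Strict Implicit. Unset Printing Implicit Defensive.
Import Order.TTheory GRing.Theory Num.Theory.
Local Open Scope ring_scope.

Section Defs.
Variable R : realType.

(* A Euclidean space: a finite-dimensional real vector space V (vectType R)
   together with an inner product ip. *)
Definition is_inner_product (V : vectType R) (ip : V -> V -> R) : Prop :=
  [/\ forall (a : R) (x y z : V), ip (a *: x + y) z = a * ip x z + ip y z,
      forall x y : V, ip x y = ip y x
    & forall x : V, x != 0 -> 0 < ip x x].

Definition ipnorm (V : vectType R) (ip : V -> V -> R) (x : V) : R :=
  Num.sqrt (ip x x).

Definition lin_isometry (U V : vectType R) (ipU : U -> U -> R)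
    (ipV : V -> V -> R) (f : U -> V) : Prop :=
  linear f /\ forall x : U, ipnorm ipV (f x) = ipnorm ipU x.

Definition isometric_action (G : groupType) (X : vectType R)
    (ipX : X -> X -> R) (act : G -> X -> X) : Prop :=
  [/\ forall x, act 1%g x = x,
      forall (g h : G) x, act (g * h)%g x = act g (act h x)
    & forall g, lin_isometry ipX ipX (act g)].

Definition in_orbit (G : groupType) (X : vectType R) (act : G -> X -> X)
    (x y : X) : Prop := exists s : G, y = act s x.

(* (X, S, gamma, (Lam a)_{a in A}) is a spectral decomposition system for H,
   where S (= G) acts on X by linear isometries and each Lam a : X -> H is linear. *)
Definition spectral_decomposition_system (H X : vectType R)
    (ipH : H -> H -> R) (ipX : X -> X -> R) (G : groupType)
    (act : G -> X -> X) (gamma : H -> X) (A : Type) (Lam : A -> X -> H) : Prop :=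
  [/\ (* [A] *) forall a, lin_isometry ipX ipH (Lam a),
      (* [B] *) exists tau : X -> X,
          [/\ forall s x, tau (act s x) = tau x,
              forall x, in_orbit act x (tau x)
            & forall a x, gamma (Lam a x) = tau x],
      (* [C] *) forall Y : H, exists a, Y = Lam a (gamma Y)
    & (* [D] *) forall Y Z : H, ipH Y Z <= ipX (gamma Y) (gamma Z)].

Definition gen_cone (H : vectType R) (D : H -> Prop) (Y : H) : Prop :=
  exists (m : nat) (Xs : 'I_m -> H) (al : 'I_m -> R),
    [/\ (0 < m)%N, forall i, D (Xs i), forall i, 0 <= al i
      & Y = \sum_(i < m) al i *: Xs i].

End Defs.

(* Main.v *)
Require Import Defs.
From HB Require Import structures.
From mathcomp Require Import all_boot all_order all_algebra.
From mathcomp Require Import reals lra.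
Import Order.TTheory GRing.Theory Num.Theory.
Local Open Scope ring_scope.
Set Implicit Arguments. Unset Strict Implicit.

Section IP.
Variables (R : realType) (V : vectType R) (ip : V -> V -> R).
Hypothesis Hip : is_inner_product ip.

Lemma ip_lin a x y z : ip (a *: x + y) z = a * ip x z + ip y z.
Proof. by case: Hip. Qed.
Lemma ipC x y : ip x y = ip y x.
Proof. by case: Hip. Qed.
Lemma ip_pos x : x != 0 -> 0 < ip x x.
Proof. by move=> nx; case: Hip => _ _ ->. Qed.

Lemma ip0l z : ip 0 z = 0.
Proof.
have := ip_lin 1 0 0 z; rewrite scaler0 addr0 mul1r => h; lra.
Qed.
Lemma ipDl x y z : ip (x + y) z = ip x z + ip y z.
Proof. by rewrite -[x in LHS]scale1r ip_lin mul1r. Qed.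
Lemma ipZl a x z : ip (a *: x) z = a * ip x z.
Proof. by rewrite -[_ *: _]addr0 ip_lin ip0l addr0. Qed.
Lemma ipNl x z : ip (- x) z = - ip x z.
Proof. by rewrite -scaleN1r ipZl mulN1r. Qed.
Lemma ipBl x y z : ip (x - y) z = ip x z - ip y z.
Proof. by rewrite ipDl ipNl. Qed.
Lemma ip0r z : ip z 0 = 0.
Proof. by rewrite ipC ip0l. Qed.
Lemma ipDr x y z : ip z (x + y) = ip z x + ip z y.
Proof. by rewrite ipC ipDl !(ipC z). Qed.
Lemma ipZr a x z : ip z (a *: x) = a * ip z x.
Proof. by rewrite ipC ipZl ipC. Qed.
Lemma ipBr x y z : ip z (x - y) = ip z x - ip z y.
Proof. by rewrite ipC ipBl !(ipC z). Qed.
Lemma ip_suml I (r : seq I) (P : pred I) (F : I -> V) z :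
  ip (\sum_(i <- r | P i) F i) z = \sum_(i <- r | P i) ip (F i) z.
Proof. exact: (big_morph (fun x => ip x z) (fun x y => ipDl x y z) (ip0l z)). Qed.
Lemma ip_sumr I (r : seq I) (P : pred I) (F : I -> V) z :
  ip z (\sum_(i <- r | P i) F i) = \sum_(i <- r | P i) ip z (F i).
Proof. by rewrite ipC ip_suml; apply: eq_bigr => i _; rewrite ipC. Qed.
Lemma ip_ge0 x : 0 <= ip x x.
Proof. have [->|/ip_pos/ltW //] := eqVneq x 0; by rewrite ip0l. Qed.
Lemma ip_le0 x : ip x x <= 0 -> x = 0.
Proof. by have [//|/ip_pos] := eqVneq x 0; rewrite ltNge => /negbTE ->. Qed.
Lemma ip_sub x y : ip (x - y) (x - y) = ip x x + ip y y - 2 * ip x y.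
Proof. rewrite ipBl !ipBr (ipC y x); lra. Qed.
End IP.
From Stdlib Require Import Classical.
Section Main.
Variables (R : realType) (H X : vectType R) (ipH : H -> H -> R) (ipX : X -> X -> R)
  (gamma : H -> X) (A : Type) (Lam : A -> X -> H).
Hypotheses (hH : is_inner_product ipH) (hX : is_inner_product ipX)
  (HLin : forall a, linear (Lam a))
  (Hiso : forall a x, ipnorm ipH (Lam a x) = ipnorm ipX x)
  (HgLg : forall a Y, gamma (Lam a (gamma Y)) = gamma Y)
  (HC : forall Y : H, exists a, Y = Lam a (gamma Y))
  (HD : forall Y Z : H, ipH Y Z <= ipX (gamma Y) (gamma Z)).

Lemma lam0 a : Lam a 0 = 0.
Proof.
have := HLin a 1 0 0; rewrite !scale1r addr0.
by move/(congr1 (fun v => v - Lam a 0)); rewrite addrK subrr => <-.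
Qed.
Lemma lamD a x y : Lam a (x + y) = Lam a x + Lam a y.
Proof. by rewrite -[x in LHS]scale1r HLin scale1r. Qed.
Lemma lamZ a c x : Lam a (c *: x) = c *: Lam a x.
Proof. by rewrite -[_ *: _]addr0 HLin lam0 addr0. Qed.
Lemma lam_sum a I (r : seq I) (P : pred I) (F : I -> X) :
  Lam a (\sum_(i <- r | P i) F i) = \sum_(i <- r | P i) Lam a (F i).
Proof. exact: (big_morph (Lam a) (lamD a) (lam0 a)). Qed.

Lemma lam_nn a x : ipH (Lam a x) (Lam a x) = ipX x x.
Proof.
have := Hiso a x; rewrite /ipnorm => /eqP; rewrite eqr_sqrt ?ip_ge0 //.
by move/eqP.
Qed.
Lemma lam_ip a u v : ipH (Lam a u) (Lam a v) = ipX u v.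
Proof.
have := lam_nn a (u + v); rewrite lamD.
rewrite !(ipDl hH) !(ipDr hH) !(ipDl hX) !(ipDr hX) !lam_nn.
rewrite (ipC hH (Lam a v)) (ipC hX v) => h; lra.
Qed.
Lemma gam_nn Y : ipX (gamma Y) (gamma Y) = ipH Y Y.
Proof. by case: (HC Y) => b hb; have := lam_nn b (gamma Y); rewrite -hb. Qed.
Lemma keyD a W Y : ipH W (Lam a (gamma Y)) <= ipX (gamma W) (gamma Y).
Proof. by have := HD W (Lam a (gamma Y)); rewrite HgLg. Qed.

Lemma final_claim a m (Xs : 'I_m -> H) (al : 'I_m -> R) :
  (forall i, Lam a (gamma (Xs i)) = Xs i) -> (forall i, 0 <= al i) ->
  gamma (\sum_i al i *: Xs i) = \sum_i al i *: gamma (Xs i).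
Proof.
move=> ha hal.
set Z := \sum_i al i *: Xs i; set u := \sum_i al i *: gamma (Xs i).
have hu : Lam a u = Z.
  by rewrite /u lam_sum; apply: eq_bigr => i _; rewrite lamZ ha.
apply/eqP; rewrite -subr_eq0; apply/eqP; apply: (ip_le0 hX).
rewrite (ip_sub hX) gam_nn -(lam_nn a u) hu.
have : ipH Z Z <= ipX (gamma Z) u.
  rewrite {1}/Z (ip_suml hH) /u (ip_sumr hX); apply: ler_sum => i _.
  rewrite (ipZl hH) (ipZr hX); apply: ler_wpM2l => //.
  by rewrite (ipC hX); apply: HD.
move=> h; lra.
Qed.

Lemma fam m (Xs : 'I_m -> H) :
  (forall i j, ipH (Xs i) (Xs j) = ipX (gamma (Xs i)) (gamma (Xs j))) ->
  exists a, forall i, Lam a (gamma (Xs i)) = Xs i.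
Proof.
move=> hi.
set Z := \sum_i Xs i.
case: (HC Z) => a hZ; exists a.
set P := fun j => Lam a (gamma (Xs j)).
set u := \sum_j gamma (Xs j).
have hWu : \sum_j P j = Lam a u by rewrite /u lam_sum.
have hW : \sum_j P j = Z.
  apply/eqP; rewrite eq_sym -subr_eq0; apply/eqP; apply: (ip_le0 hH).
  rewrite (ip_sub hH) hWu lam_nn.
  have e1 : ipX u u = ipH Z Z.
    rewrite /u /Z (ip_suml hX) (ip_suml hH); apply: eq_bigr => i _.
    rewrite (ip_sumr hX) (ip_sumr hH); apply: eq_bigr => j _.
    by rewrite hi.
  have e2 : ipH Z Z <= ipH Z (Lam a u).
    have := lam_ip a (gamma Z) u; rewrite -hZ => ->.
    rewrite /u (ip_sumr hX) {1}/Z (ip_sumr hH).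
    by apply: ler_sum => j _; rewrite (ipC hH) (ipC hX); apply: HD.
  rewrite e1; lra.
move=> i.
have ge : ipH (Xs i) (Xs i) <= ipH (Xs i) (P i).
  have h1 : ipH (Xs i) Z = \sum_j ipH (Xs i) (P j) by rewrite -hW (ip_sumr hH).
  have h2 : ipH (Xs i) Z = \sum_j ipH (Xs i) (Xs j) by rewrite (ip_sumr hH).
  rewrite (bigD1 i) //= in h1; rewrite (bigD1 i) //= in h2.
  have h3 : \sum_(j | j != i) ipH (Xs i) (P j) <= \sum_(j | j != i) ipH (Xs i) (Xs j).
    by apply: ler_sum => j _; rewrite hi; apply: keyD.
  lra.
apply/eqP; rewrite eq_sym -subr_eq0; apply/eqP; apply: (ip_le0 hH).
rewrite (ip_sub hH) /P lam_nn gam_nn -/(P i); lra.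
Qed.

End Main.

Lemma span_fin (R : realType) (H : vectType R) (D : H -> Prop) :
  exists s : seq H, (forall Y, Y \in s -> D Y) /\ forall Y, D Y -> Y \in <<s>>%VS.
Proof.
apply: NNPP => hn.
have hk : forall k, exists s : seq H, (forall Y, Y \in s -> D Y) /\ (k <= \dim <<s>>%VS)%N.
  elim=> [|k [s [hs hk]]]; first by exists [::].
  have [Y [DY nY]] : exists Y, D Y /\ Y \notin <<s>>%VS.
    apply: NNPP => h; apply: hn; exists s; split=> // Y DY.
    case: (boolP (Y \in <<s>>%VS)) => // nY; exfalso; apply: h; by exists Y.
  exists (Y :: s); split.
    by move=> Z; rewrite inE => /orP [/eqP -> | /hs].
  apply: leq_trans (_ : (\dim <<s>>%VS).+1 <= _)%N => //.
  have sub : (<<s>> <= <<Y :: s>>)%VS by rewrite span_cons addvSr.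
  rewrite (ltn_leqif (dimv_leqif_eq sub)).
  apply/negP => /eqP E; move: nY; rewrite E memv_span //; exact: mem_head.
have [s [_ hs]] := hk (\dim (fullv : {vspace H})).+1.
by move: hs; rewrite ltnNge dimvS // subvf.
Qed.

Theorem proposition3p6 (R : realType) (H X : vectType R)
    (ipH : H -> H -> R) (ipX : X -> X -> R) (G : groupType)
    (act : G -> X -> X) (gamma : H -> X) (A : Type) (Lam : A -> X -> H)
    (D : H -> Prop) :
  is_inner_product ipH -> is_inner_product ipX ->
  isometric_action ipX act ->
  (forall a, linear (Lam a)) ->
  spectral_decomposition_system ipH ipX act gamma Lam ->
  (exists Y, D Y) ->
  let cond_i := forall Y Z, D Y -> D Z -> ipH Y Z = ipX (gamma Y) (gamma Z) in
  let cond_ii := forall Y Z, D Y -> D Z ->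
      ipnorm ipH (Y - Z) = ipnorm ipX (gamma Y - gamma Z) in
  let cond_iii := exists a, forall Y, D Y -> Y = Lam a (gamma Y) in
  let cond_iv := exists a, forall Y, gen_cone D Y -> Y = Lam a (gamma Y) in
  [/\ cond_i <-> cond_ii, cond_i <-> cond_iii, cond_i <-> cond_iv
    & cond_i -> forall (m : nat) (Xs : 'I_m -> H) (al : 'I_m -> R),
        (0 < m)%N -> (forall i, D (Xs i)) -> (forall i, 0 <= al i) ->
        gamma (\sum_(i < m) al i *: Xs i) = \sum_(i < m) al i *: gamma (Xs i)].
Proof.
move=> hH hX _ HLin [HA [tau [t1 t2 t3]] HC HD] _ ci cii ciii civ.
have Hiso : forall a x, ipnorm ipH (Lam a x) = ipnorm ipX x.
  by move=> a x; case: (HA a) => _ ->.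
have HgLg : forall a Y, gamma (Lam a (gamma Y)) = gamma Y.
  by move=> a Y; case: (HC Y) => b hb; rewrite t3 -(t3 b) -hb.
have i_iii : ci -> ciii.
  move=> hi; have [s [hsD hs]] := span_fin D.
  pose Xs := fun i : 'I_(size s) => s`_i.
  have [a ha] : exists a, forall i, Lam a (gamma (Xs i)) = Xs i.
    apply: (fam hH hX HLin Hiso HgLg HC HD) => i j; apply: hi; apply: hsD;
      exact: mem_nth.
  exists a => Y DY.
  have e : forall V, V \in <<s>>%VS -> ipH V (Lam a (gamma Y)) = ipH V Y.
    move=> V /(@coord_span _ _ _ (in_tuple s)) ->.
    rewrite !(ip_suml hH); apply: eq_bigr => i _; rewrite !(ipZl hH); congr (_ * _).
    have := lam_ip hH hX HLin Hiso a (gamma (Xs i)) (gamma Y).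
    have hDi : D (Xs i) by apply: hsD; apply: mem_nth.
    by rewrite ha => ->; rewrite -hi.
  apply/eqP; rewrite -subr_eq0; apply/eqP; apply: (ip_le0 hH).
  rewrite (ip_sub hH) (lam_nn hH hX Hiso) (gam_nn hH hX Hiso HC) e ?hs //; lra.
have iii_i : ciii -> ci.
  move=> [a ha] Y Z DY DZ.
  have := lam_ip hH hX HLin Hiso a (gamma Y) (gamma Z).
  by rewrite -(ha Y DY) -(ha Z DZ).
have fin : ciii -> forall (m : nat) (Xs : 'I_m -> H) (al : 'I_m -> R),
        (forall i, D (Xs i)) -> (forall i, 0 <= al i) ->
        gamma (\sum_(i < m) al i *: Xs i) = \sum_(i < m) al i *: gamma (Xs i).
  move=> [a ha] m Xs al hD hal.
  apply: (final_claim hH hX HLin Hiso HC HD (a:=a)) => // i.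
  by rewrite -ha.
split.
- split.
  + move=> hi Y Z DY DZ; rewrite /ipnorm (ip_sub hH) (ip_sub hX).
    by rewrite !(gam_nn hH hX Hiso HC) (hi Y Z DY DZ).
  + move=> hii Y Z DY DZ; have := hii Y Z DY DZ.
    rewrite /ipnorm => /eqP; rewrite eqr_sqrt ?(ip_ge0 hH) ?(ip_ge0 hX) //.
    rewrite (ip_sub hH) (ip_sub hX) !(gam_nn hH hX Hiso HC) => /eqP h; lra.
- by split.
- split.
  + move=> /i_iii hiii; have [a ha] := hiii; exists a.
    move=> Y [m [Xs [al [_ hD hal ->]]]].
    rewrite (fin hiii) // lam_sum //; apply: eq_bigr => i _.
    by rewrite lamZ // -ha.
  + move=> [a ha]; apply: iii_i; exists a => Y DY; apply: ha.
    exists 1%N, (fun _ => Y), (fun _ => 1); split=> //.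
    by rewrite big_ord1 scale1r.
- move=> /i_iii hiii m Xs al _; exact: fin.
Qed.
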